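(* (i) The solutions $(p,m)\in\mathbb{Z}_{\ge0}\times\mathbb{Z}_{>0}$ of $p^2-mp+\frac{m(m-1)}{6}=0$ with $p\le[\frac m2]$ are precisely the pairs $(p_i,m_i)$, $i\ge1$, defined by $(p_1,m_1)=(0,1)$, $p_{i+1}=m_i-p_i$, $m_{i+1}=5m_i-6p_i+1$. (ii) The solutions $(q,n)\in\mathbb{Z}_{\ge0}\times\mathbb{Z}_{>0}$ of $q^2-2nq+\frac{n(2n-1)}{3}=0$ with $q\le n$ are precisely the pairs $(q_i,n_i)$, $i\ge1$, defined by $(q_1,n_1)=(1,3)$, $q_{i+1}=8n_i-5q_i+1$, $n_{i+1}=19n_i-12q_i+3$. *)

(* Defs.v *)
From mathcomp Require Import all_boot all_order all_algebra.
Set Implicit Arguments. Unset Strict Implicit. Unset Printing Implicit Defensive.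
Import Order.TTheory GRing.Theory Num.Theory.
Local Open Scope ring_scope.

(* (p_i, m_i) for i >= 1; index 0 is an unused dummy value. *)
Fixpoint pm_seq (i : nat) : int * int :=
  match i with
  | 0%N => (0, 1)
  | i'.+1 =>
    match i' with
    | 0%N => (0, 1)
    | _ => let (p, m) := pm_seq i' in (m - p, 5 * m - 6 * p + 1)
    end
  end.

(* (q_i, n_i) for i >= 1; index 0 is an unused dummy value. *)
Fixpoint qn_seq (i : nat) : int * int :=
  match i with
  | 0%N => (1, 3)
  | i'.+1 =>
    match i' with
    | 0%N => (1, 3)
    | _ => let (q, n) := qn_seq i' in (8 * n - 5 * q + 1, 19 * n - 12 * q + 3)
    end
  end.

(* Main.v *)
Require Import Defs.
From mathcomp Require Import all_boot all_order all_algebra.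
Import Order.TTheory GRing.Theory Num.Theory.
Local Open Scope ring_scope.
From mathcomp Require Import zify ring lra.
Local Open Scope ring_scope.

Lemma pmS i : pm_seq i.+2 = let (p, m) := pm_seq i.+1 in (m - p, 5  *  m - 6  *  p + 1).
Proof. by []. Qed.
Lemma qnS i : qn_seq i.+2 = let (q, n) := qn_seq i.+1 in (8  *  n - 5  *  q + 1, 19  *  n - 12  *  q + 3).
Proof. by []. Qed.

Lemma convP (p m : int) : (p%:~R : rat) ^+ 2 - m%:~R  *  p%:~R + m%:~R  *  (m%:~R - 1) / 6 = 0
  <-> 6 * p^+2 - 6 * m * p + m * (m-1) = 0.
Proof.
have -> : (p%:~R : rat) ^+ 2 - m%:~R  *  p%:~R + m%:~R  *  (m%:~R - 1) / 6 = (6 * p^+2 - 6 * m * p + m * (m-1))%:~R / 6.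
  by rewrite !(rmorphB, rmorphD, rmorphM, rmorphXn, rmorph1) /=; field.
split=> h; last by rewrite h mulr0z mul0r.
have : (6 * p^+2 - 6 * m * p + m * (m-1))%:~R = (0:rat).
  by rewrite -[LHS](@mulfVK _ 6) // h mul0r.
by move/eqP; rewrite intr_eq0 => /eqP.
Qed.

Lemma convQ (q n : int) : (q%:~R : rat) ^+ 2 - 2  *  n%:~R  *  q%:~R + n%:~R  *  (2  *  n%:~R - 1) / 3 = 0
  <-> 3 * q^+2-6 * n * q+n * (2 * n-1)=0.
Proof.
have -> : (q%:~R : rat) ^+ 2 - 2  *  n%:~R  *  q%:~R + n%:~R  *  (2  *  n%:~R - 1) / 3 = (3 * q^+2-6 * n * q+n * (2 * n-1))%:~R / 3.
  by rewrite !(rmorphB, rmorphD, rmorphM, rmorphXn, rmorph1) /=; field.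
split=> h; last by rewrite h mulr0z mul0r.
have : (3 * q^+2-6 * n * q+n * (2 * n-1))%:~R = (0:rat).
  by rewrite -[LHS](@mulfVK _ 3) // h mul0r.
by move/eqP; rewrite intr_eq0 => /eqP.
Qed.

Lemma divz2 (p m : int) : 0 < m -> (p <= (m %/ 2)%Z) <-> (2  *  p <= m).
Proof. move=> hm. split=> h; lia. Qed.

Lemma i1 (p m : int) : 0<=p -> 2 <= m -> 6 * p^+2-6 * m * p+m * (m-1)=0 -> 2 * p<=m -> 0 < p.
Proof. move=>  * ; nia. Qed.
Lemma i2 (p m : int) : 0<=p -> 2 <= m -> 6 * p^+2-6 * m * p+m * (m-1)=0 -> 2 * p<=m -> m <= 5 * p+1.
Proof. move=>  * ; nia. Qed.
Lemma i3 (p m : int) : 0<=p -> 2 <= m -> 6 * p^+2-6 * m * p+m * (m-1)=0 -> 2 * p<=m -> 4 * p+1 <= m.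
Proof. move=>  * ; nia. Qed.
Lemma j1 (q n : int) : 0<=q -> 0 < n -> 3 * q^+2-6 * n * q+n * (2 * n-1)=0 -> q<=n -> 8 * n <= 19 * q+5.
Proof. move=>  * ; nia. Qed.
Lemma j2 (q n : int) : 0<=q -> 0 < n -> 3 * q^+2-6 * n * q+n * (2 * n-1)=0 -> q<=n -> (q,n) <> (1,3) -> 5 * n <= 12 * q+2.
Proof.
move=> h1 h2 h3 h4 hne; rewrite leNgt; apply/negP => hlt.
set k := 5 * n - 12 * q - 3.
have hk : 0 <= k by rewrite /k; lia.
have E : 3 * (q-1)^+2 + k * (18 * q + 7) + 2 * k^+2 = 25 * (3 * q^+2-6 * n * q+n * (2 * n-1)).
  by rewrite /k; ring.
rewrite h3 mulr0 in E.
have t1 : 0 <= k * (18 * q + 7) by apply: mulr_ge0 => //; lia.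
have t2 : 0 <= k^+2 := sqr_ge0 _.
have t3 : 0 <= (q-1)^+2 := sqr_ge0 _.
have : (q-1)^+2 = 0 by lia.
move/eqP; rewrite sqrf_eq0 subr_eq0 => /eqP q1.
rewrite q1 in E t1 hk.
have k0 : k = 0 by nia.
apply: hne; rewrite q1; congr pair.
move: k0; rewrite /k q1; lia.
Qed.
Lemma j3 (q n : int) : 0<=q -> 0 < n -> 3 * q^+2-6 * n * q+n * (2 * n-1)=0 -> q<=n -> 4 * q+2 <= 2 * n.
Proof. move=>  * ; nia. Qed.
Lemma j4 (q n : int) : 0<=q -> 0 < n -> 3 * q^+2-6 * n * q+n * (2 * n-1)=0 -> q<=n -> 7 * q+2 <= 3 * n.
Proof. move=>  * ; nia. Qed.

Definition PI (p m : int) := 0 <= p /\ 0 < m /\ 6 * p^+2 - 6 * m * p + m * (m-1) = 0 /\ 2 * p <= m.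
Definition QI (q n : int) := 0 <= q /\ 0 < n /\ 3 * q^+2-6 * n * q+n * (2 * n-1)=0 /\ q <= n.

Lemma PI_seq i : PI (pm_seq i.+1).1 (pm_seq i.+1).2.
Proof.
elim: i => [|i IH]; first by rewrite /PI /=; lia.
rewrite pmS; case: (pm_seq i.+1) IH => p m /= [h1 [h2 [h3 h4]]]; rewrite /PI /=.
split; first lia. split; first lia. split; last lia.
by rewrite -[RHS]h3; ring.
Qed.

Lemma QI_seq i : QI (qn_seq i.+1).1 (qn_seq i.+1).2.
Proof.
elim: i => [|i IH]; first by rewrite /QI /=; lia.
rewrite qnS; case: (qn_seq i.+1) IH => q n /= [h1 [h2 [h3 h4]]]; rewrite /QI /=.
split; first lia. split; first lia. split; last lia.
by rewrite -[RHS]h3; ring.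
Qed.

Lemma PI_desc k : forall p m, (absz m <= k)%N -> PI p m -> exists i, (1 <= i)%N /\ (p, m) = pm_seq i.
Proof.
elim: k => [|k IH] p m hk [h1 [h2 [h3 h4]]].
  exfalso; lia.
have [em1|hm1] := eqVneq m 1.
  by exists 1%N; split => //; rewrite em1; congr pair; lia.
have hm : 2 <= m by lia.
have a1 := @i1 _ _ h1 hm h3 h4. have a2 := @i2 _ _ h1 hm h3 h4. have a3 := @i3 _ _ h1 hm h3 h4.
have [i [hi e]] : exists i, (1 <= i)%N /\ (5 * p+1-m, 6 * p+1-m) = pm_seq i.
  apply: IH; first lia.
  split; first lia. split; first lia. split; last lia.
  by rewrite -[RHS]h3; ring.
exists i.+1; split => //.
case: i hi e => [//|i] _ e.
rewrite pmS -e; congr pair; ring.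
Qed.

Lemma QI_desc k : forall q n, (absz n <= k)%N -> QI q n -> exists i, (1 <= i)%N /\ (q, n) = qn_seq i.
Proof.
elim: k => [|k IH] q n hk [h1 [h2 [h3 h4]]].
  exfalso; lia.
have [e13|hne] := eqVneq (q, n) (1, 3).
  by exists 1%N; split.
have hne' : (q, n) <> (1, 3) by move=> e; rewrite e eqxx in hne.
have a1 := @j1 _ _ h1 h2 h3 h4. have a2 := @j2 _ _ h1 h2 h3 h4 hne'.
have a3 := @j3 _ _ h1 h2 h3 h4. have a4 := @j4 _ _ h1 h2 h3 h4.
have [i [hi e]] : exists i, (1 <= i)%N /\ (19 * q-8 * n+5, 12 * q-5 * n+3) = qn_seq i.
  apply: IH; first lia.
  split; first lia. split; first lia. split; last lia.
  by rewrite -[RHS]h3; ring.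
exists i.+1; split => //.
case: i hi e => [//|i] _ e.
rewrite qnS -e; congr pair; ring.
Qed.

Theorem lemma3p5 :
  (forall p m : int,
     (0 <= p /\ 0 < m /\
      (p%:~R : rat) ^+ 2 - m%:~R  *  p%:~R + m%:~R  *  (m%:~R - 1) / 6 = 0 /\
      p <= (m %/ 2)%Z)
     <-> exists i : nat, (1 <= i)%N /\ (p, m) = pm_seq i)
  /\
  (forall q n : int,
     (0 <= q /\ 0 < n /\
      (q%:~R : rat) ^+ 2 - 2  *  n%:~R  *  q%:~R + n%:~R  *  (2  *  n%:~R - 1) / 3 = 0 /\
      q <= n)
     <-> exists i : nat, (1 <= i)%N /\ (q, n) = qn_seq i).
Proof.
split.
  move=> p m; split.
    move=> [h1 [h2 [h3 h4]]].
    apply: (@PI_desc (absz m)) => //.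
    split=> //; split=> //; split; first exact/convP.
    lia.
  move=> [i [hi e]]; case: i hi e => [//|i] _ e.
  have := PI_seq i; rewrite -e /= => -[h1 [h2 [h3 h4]]].
  split=> //; split=> //; split; first exact/convP.
  lia.
move=> q n; split.
  move=> [h1 [h2 [h3 h4]]].
  apply: (@QI_desc (absz n)) => //.
  split=> //; split=> //; split=> //; exact/convQ.
move=> [i [hi e]]; case: i hi e => [//|i] _ e.
have := QI_seq i; rewrite -e /= => -[h1 [h2 [h3 h4]]].
split=> //; split=> //; split=> //; exact/convQ.
Qed.
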